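(* Let $\phi$ be a proper partial coloring of $G$, let $xy$ be an uncolored edge, and let $\beta\in M(\phi,y)\cup\{\mathsf{blank}\}$. Consider running the Random Fan procedure with parameter $k_{\max}$ on input $(\phi,xy,x,\beta)$, and let $T$ be the number of attempts that fail (i.e., reach $k=k_{\max}$ without returning) before the first successful attempt. If $k_{\max}\ge\frac{8(1+\epsilon)}{\epsilon(2-\epsilon)}$, then for every $t\ge 0$, \[\mathbb{P}[T\ge t]\le\exp\left(-\epsilon^2\,t\,k_{\max}/100\right).\]
   Context: $G$ is a finite simple graph of maximum degree $\Delta$, $\epsilon\in(0,1)$ with $\Delta\ge1/\epsilon$, and $q=(1+\epsilon)\Delta$ is assumed to be an integer; $[q]=\{1,\ldots,q\}$. A partial coloring is a map $\phi\colon E(G)\to[q]\cup\{\mathsf{blank}\}$ ($\mathsf{blank}$ = uncolored), proper if distinct colored edges sharing a vertex get distinct colors. $M(\phi,v)=[q]\setminus\{\phi(vw):vw\in E(G)\}$ is the set of colors missing at $v$. For a vertex $v$ and $\theta\in[q]\cup\{\mathsf{blank}\}$, ''a random color from $M(\phi,v)\setminus\{\theta\}$'' is obtained by repeatedly drawing $\eta\in[q]$ uniformly at random until $\eta\ne\theta$ and $\eta\in M(\phi,v)$ (so it is uniform on $M(\phi,v)\setminus\{\theta\}$). The Random Fan procedure with parameter $k_{\max}\in\mathbb{N}$ on input $(\phi,xy,x,\beta)$ performs independent attempts until one returns. An attempt: set $y_0=y$, $k=0$, $\theta=\beta$. While $k<k_{\max}$: choose a random color $\eta$ from $M(\phi,y_k)\setminus\{\theta\}$;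 set $\theta=\mathsf{blank}$; if $\eta\in M(\phi,x)$, return; else if $\eta=\beta$, return; else if $\eta\in M(\phi,y_{j-1})$ for some $1\le j\le k$, return; otherwise increase $k$ by one and let $y_k$ be the unique neighbor of $x$ with $\phi(xy_k)=\eta$ (appending the edge $xy_k$ to the fan). If the while loop ends because $k=k_{\max}$, the attempt fails and a new attempt is started from scratch. An attempt that returns is called successful. *)

(* Defs.v *)
From mathcomp Require Import all_boot all_order all_algebra.
From mathcomp Require Import reals.
From mathcomp.analysis Require Import sequences exp.
Set Implicit Arguments. Unset Strict Implicit. Unset Printing Implicit Defensive.
Import Order.TTheory GRing.Theory Num.Theory.
Local Open Scope ring_scope.

Definition simple_graph (V : finType) (e : rel V) :=
  symmetric e /\ irreflexive e.

Definition deg (V : finType) (e : rel V) (v : V) : nat := #|[set w | e v w]|.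

Definition max_degree (V : finType) (e : rel V) : nat := (\max_(v : V) deg e v)%N.

(* A partial edge coloring with colors 'I_q (= [q], shifted to 0-based);
   phi u v = None means the edge uv is blank (uncolored).
   The value of phi on non-edges is irrelevant. *)
Definition pcoloring (V : finType) (q : nat) := V -> V -> option 'I_q.

Definition is_edge_coloring (V : finType) (e : rel V) q (phi : pcoloring V q) :=
  forall u v, phi u v = phi v u.

Definition proper_coloring (V : finType) (e : rel V) q (phi : pcoloring V q) :=
  forall v w w' (c : 'I_q), e v w -> e v w' -> w != w' ->
    phi v w = Some c -> phi v w' <> Some c.

Definition missing (V : finType) (e : rel V) q (phi : pcoloring V q) (v : V)
  : {set 'I_q} :=
  [set c | ~~ [exists w, e v w && (phi v w == Some c)]].

(* the (unique, for proper phi) neighbor w of x with phi(xw) = c; default x *)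
Definition nbr_col (V : finType) (e : rel V) q (phi : pcoloring V q) (x : V)
  (c : 'I_q) : V :=
  odflt x [pick w | e x w && (phi x w == Some c)].

Section RandomFan.
Variables (R : realType) (V : finType) (e : rel V) (q : nat)
          (phi : pcoloring V q) (x : V) (beta : option 'I_q).

(* Probability that a single attempt of Random Fan on input (phi, xy, x, beta)
   fails, computed from the current state: n = k_max - k steps remaining,
   fan = [:: y_0; ...; y_{k-1}], cur = y_k, theta the excluded value.
   eta is uniform on M(phi, y_k) \ {theta}. *)
Fixpoint attempt_fail_prob (n : nat) (fan : seq V) (cur : V)
  (theta : option 'I_q) : R :=
  match n with
  | 0 => 1
  | n'.+1 =>
    let S := [set c in missing e phi cur | Some c != theta] in
    \sum_(c in S) (#|S|%:R)^-1 *
      (if [|| c \in missing e phi x, Some c == beta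
            | has (fun w => c \in missing e phi w) fan]
       then 0
       else attempt_fail_prob n' (rcons fan cur) (nbr_col e phi x c) None)
  end.

End RandomFan.

Definition fail_prob (R : realType) (V : finType) (e : rel V) q
  (phi : pcoloring V q) (x y : V) (beta : option 'I_q) (kmax : nat) : R :=
  attempt_fail_prob R e phi x beta kmax [::] y beta.

(* P[T >= t] where T = number of failed attempts before the first successful
   one; attempts are independent and identically distributed, so
   T >= t  iff  the first ceil(t) attempts fail. *)
Definition prob_T_ge (R : realType) (V : finType) (e : rel V) q
  (phi : pcoloring V q) (x y : V) (beta : option 'I_q) (kmax : nat) (t : R) : R :=
  fail_prob R e phi x y beta kmax ^+ `|Num.ceil t|%N.

(* Main.v *)
Require Import Defs.
From mathcomp Require Import all_boot all_order all_algebra.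
From mathcomp Require Import reals.
From mathcomp.analysis Require Import sequences exp.
From mathcomp Require Import zify ring lra.
Import Order.TTheory GRing.Theory Num.Theory.
Local Open Scope ring_scope.
Set Implicit Arguments. Unset Strict Implicit.

Section Aux.
Variables (R : realType) (V : finType) (e : rel V) (q : nat)
          (phi : pcoloring V q) (x : V) (beta : option 'I_q).

Lemma card_notmiss w (X : {set V}) :
  (forall w', e w w' -> phi w w' != None -> w' \in X) ->
  (#|~: missing e phi w| <= #|X|)%N.
Proof.
move=> hX.
have sub: Some @: (~: missing e phi w) \subset (phi w) @: X.
  apply/subsetP => o /imsetP [c]; rewrite !inE negbK => /existsP [w' /andP [ew /eqP pw]] ->.
  apply/imsetP; exists w' => //; apply: hX => //; by rewrite pw.
rewrite -(card_imset _ (@Some_inj _)).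
exact: leq_trans (subset_leq_card sub) (leq_imset_card _ _).
Qed.

Definition Aset := ~: missing e phi x.
Definition Uset (fan : seq V) := [set c in Aset | has (fun w => c \in missing e phi w) fan].
Definition Sset cur (theta : option 'I_q) := [set c in missing e phi cur | Some c != theta].

Lemma F_ge0 n fan cur theta : 0 <= attempt_fail_prob R e phi x beta n fan cur theta.
Proof.
elim: n fan cur theta => [|n IH] fan cur theta /=; first exact: ler01.
apply: sumr_ge0 => c _; apply: mulr_ge0; first by rewrite invr_ge0.
by case: ifP.
Qed.

Lemma F_le (d : R) : 0 < d ->
  (forall c, c \notin missing e phi x -> d <= #|missing e phi (nbr_col e phi x c)|%:R) ->
  forall n fan cur theta, d <= #|Sset cur theta|%:R ->
  attempt_fail_prob R e phi x beta n fan cur theta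
    <= expR (- n%:R + (#|Aset| - #|Uset fan|)%:R / d).
Proof.
move=> d0 hglob; elim=> [|n IH] fan cur theta hS /=.
  rewrite oppr0 add0r; apply: le_trans (expR_ge1Dx _).
  by rewrite lerDl divr_ge0 // ltW.
rewrite -/(Sset cur theta).
set S := Sset cur theta.
set cond := fun c => [|| c \in missing e phi x, Some c == beta
            | has (fun w => c \in missing e phi w) fan].
set E' := expR (- n%:R + (#|Aset| - #|Uset (rcons fan cur)|)%:R / d).
pose C := [set c in S | ~~ cond c].
have step1 : \sum_(c in S) #|S|%:R^-1 * (if cond c then 0 else
      attempt_fail_prob R e phi x beta n (rcons fan cur) (nbr_col e phi x c) None)
    <= \sum_(c in S) (if c \in C then #|S|%:R^-1 * E' else 0).
  apply: ler_sum => c cS; rewrite inE cS /=.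
  case hc: (cond c) => /=; first by rewrite mulr0.
  apply: ler_wpM2l; first by rewrite invr_ge0.
  apply: IH.
  have -> : Sset (nbr_col e phi x c) None = missing e phi (nbr_col e phi x c).
    by apply/setP => c'; rewrite !inE andbT.
  apply: hglob; move: hc; rewrite /cond; by case: (c \in missing e phi x).
apply: (le_trans step1); rewrite -big_mkcondr /=.
rewrite (eq_bigl (fun c => c \in C)); last by move=> c /=; apply: andb_idl; rewrite /C => /setIdP [].
rewrite (sumr_const (mem C)).
have hU : (#|Uset fan| + #|C| <= #|Uset (rcons fan cur)|)%N.
  have dis : Uset fan :&: C = set0.
    apply/setP => c; rewrite !inE /cond.
    by case: (has _ fan); rewrite ?andbF ?orbT /= ?andbF.
  have sub : Uset fan :|: C \subset Uset (rcons fan cur).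
    apply/subsetP => c; rewrite !inE has_rcons.
    case/orP => [/andP [-> ->]|]; first by rewrite orbT.
    case/andP => /andP [cmiss _]; rewrite /cond negb_or => /andP [hA _].
    apply/andP; split; first by move: hA; rewrite inE.
    by rewrite inE cmiss.
  by have := cardsU (Uset fan) C; rewrite dis cards0 subn0 => <-; apply: subset_leq_card.
have hUA : (#|Uset (rcons fan cur)| <= #|Aset|)%N.
  by apply: subset_leq_card; apply/subsetP => c; rewrite inE => /andP [].
have hnat : ((#|Aset| - #|Uset (rcons fan cur)|) + #|C| <= #|Aset| - #|Uset fan|)%N by lia.
move: hnat; rewrite -(ler_nat R) natrD.
set b' := (_ - _)%:R; set b := (_ - _)%:R; set k := #|C|%:R => hb.
have Spos : 0 < #|S|%:R :> R by apply: lt_le_trans hS.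
set s := #|S|%:R in Spos hS *.
pose p := k / s.
have k0 : 0 <= k by rewrite ler0n.
have hp : p <= k / d.
  by rewrite /p ler_pdivrMr // mulrAC ler_pdivlMr // ler_wpM2l.
have hE : E' <= expR (- n%:R + b / d - p).
  rewrite /E' ler_expR -addrA lerD2l.
  apply: (@le_trans _ _ ((b - k) / d)); first by rewrite ler_pdivrMr // divfK ?gt_eqF // lerBrDr.
  by rewrite mulrBl lerD2l lerN2.
rewrite -[_ *+ #|_|]mulr_natl mulrA -/k -/p.
have -> : - (n.+1)%:R + b / d = (- n%:R + b / d - p) + (p - 1).
  by rewrite -addn1 natrD; ring.
rewrite expRD mulrC; apply: ler_pM.
- by rewrite expR_ge0.
- by rewrite /p divr_ge0 // ltW.
- exact: hE.
- by have := expR_ge1Dx (p - 1); rewrite addrC subrK.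
Qed.

End Aux.

Theorem proposition5p1 (R : realType) (V : finType) (e : rel V)
  (eps : R) (q : nat) (phi : pcoloring V q) (x y : V) (beta : option 'I_q)
  (kmax : nat) :
  simple_graph e ->
  0 < eps < 1 ->
  (max_degree e)%:R >= eps^-1 ->
  q%:R = (1 + eps) * (max_degree e)%:R ->
  is_edge_coloring e phi -> proper_coloring e phi ->
  e x y -> phi x y = None ->
  (match beta with Some c => c \in missing e phi y | None => true end) ->
  kmax%:R >= 8 * (1 + eps) / (eps * (2 - eps)) ->
  forall t : R, 0 <= t ->
    prob_T_ge e phi x y beta kmax t <= expR (- (eps ^+ 2 * t * kmax%:R) / 100).
Proof.
move=> [esym _] /andP [e0 e1] hD hq hec _ exy pxy _ hk t t0.
set D := max_degree e in hD hq.
have hdeg w : (deg e w <= D)%N by rewrite /D /max_degree; apply: (@leq_bigmax _ (fun v => deg e v) w).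
have Dpos : 0 < D%:R :> R by apply: lt_le_trans hD; rewrite invr_gt0.
pose d := q%:R - D%:R : R.
have dE : d = eps * D%:R by rewrite /d hq; ring.
have d0 : 0 < d by rewrite dE mulr_gt0.
have hM w (X : {set V}) : (forall w', e w w' -> phi w w' != None -> w' \in X) ->
    (q <= #|missing e phi w| + #|X|)%N.
  move=> hX; have := card_notmiss hX; have := cardsC (missing e phi w).
  rewrite card_ord; lia.
have hglob c : c \notin missing e phi x -> d <= #|missing e phi (nbr_col e phi x c)|%:R.
  rewrite /nbr_col; case: pickP => [w /andP [exw _] | hnone] /= hc.
    have := hM w [set w' | e w w'] (fun w' ew _ => ltac:(by rewrite inE)).
    have := hdeg w; rewrite /deg => h1 h2.
    have : (q <= #|missing e phi w| + D)%N by lia.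
    rewrite -(ler_nat R) natrD /d => h; lra.
  move: hc; rewrite inE negbK => /existsP [w hw].
  by have := hnone w; rewrite hw.
have hS : d <= #|Sset e phi y beta|%:R.
  have hX : forall w', e y w' -> phi y w' != None -> w' \in [set w' | e y w'] :\ x.
    move=> w' ew pw; rewrite !inE ew andbT; apply/eqP => wx; move: pw.
    by rewrite wx hec pxy.
  have h1 := hM y _ hX.
  have h2 := cardsD1 x [set w' | e y w'].
  have eyx : x \in [set w' | e y w'] by rewrite inE esym.
  rewrite eyx in h2.
  have h3 := hdeg y; rewrite /deg in h3.
  have h4 : (#|missing e phi y| <= #|Sset e phi y beta| + 1)%N.
    case: beta => [b|].
      have -> : Sset e phi y (Some b) = missing e phi y :\ b.
        by apply/setP => c; rewrite !inE /= andbC.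
      by rewrite (cardsD1 b (missing e phi y)); case: (b \in _); rewrite /= ?addn1 ?addn0.
    have -> : Sset e phi y None = missing e phi y.
      by apply/setP => c; rewrite !inE andbT.
    by rewrite addn1.
  have : (q <= #|Sset e phi y beta| + D)%N by lia.
  rewrite -(ler_nat R) natrD /d => h; lra.
have hf := F_le beta d0 hglob kmax [::] hS.
have U0 : #|Uset e phi x [::]| = 0%N.
  by apply/eqP; rewrite cards_eq0; apply/eqP/setP => c; rewrite !inE andbF.
move: hf; rewrite U0 subn0 => hf.
have hA : #|Aset e phi x|%:R <= D%:R :> R.
  rewrite ler_nat; apply: leq_trans (hdeg x).
  by apply: card_notmiss => w' ew _; rewrite inE.
set K := kmax%:R in hk hf *.
have K0 : 0 <= K by rewrite ler0n.
set u := eps^-1 in hD.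
have hAd : #|Aset e phi x|%:R / d <= u.
  rewrite ler_pdivrMr // dE /u mulrA mulVf ?gt_eqF // mul1r //.
have h4u : 4 * u <= K.
  apply: le_trans hk; rewrite ler_pdivlMr; last by rewrite mulr_gt0 // subr_gt0; lra.
  have -> : 4 * u * (eps * (2 - eps)) = 4 * (2 - eps) by rewrite /u; field; rewrite gt_eqF.
  lra.
have he2 : eps ^+ 2 * K <= K by apply: ler_piMl => //; rewrite expr_le1 //; lra.
set a := eps ^+ 2 * K / 100.
have a0 : 0 <= a by rewrite /a divr_ge0 // mulr_ge0 // ?sqr_ge0.
have hfa : fail_prob R e phi x y beta kmax <= expR (- a).
  apply: le_trans hf _; rewrite ler_expR /a; lra.
rewrite /prob_T_ge.
set m := `|Num.ceil t|%N.
apply: le_trans (_ : expR (- a) ^+ m <= _).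
  apply: lerXn2r => //; rewrite nnegrE ?expR_ge0 //.
  exact: F_ge0.
rewrite -expRM_natl ler_expR.
have -> : - (eps ^+ 2 * t * K) / 100 = - (t * a) by rewrite /a; ring.
rewrite mulrN lerN2; apply: ler_wpM2r => //.
rewrite /m natr_absz ger0_norm ?ceil_ge //.
by rewrite ceil_ge0; lra.
Qed.
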